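(* Let $Y\subseteq R^n$ be a definable set and $\mathcal C$ a special linear decomposition of $Y$. Then for every box $B_1\subseteq R^n$ there is a box $B\supseteq B_1$ such that the collection $\mathcal D=\{B\cap D: D\in\mathcal C\}\setminus\{\emptyset\}$ is a special linear decomposition of $B\cap Y$.
   Context: Throughout, $\mathcal R=\langle R,<,+,0,\{x\mapsto\lambda x\}_{\lambda\in\Lambda}\rangle$ is an ordered vector space over an ordered division ring $\Lambda$; ''definable'' means definable in $\mathcal R$ with parameters. $R^n$ carries the product of the order topology, $cl$ denotes closure, $\pi:R^n\to R^{n-1}$ is the projection onto the first $n-1$ coordinates, $R^0=\{0\}$. A box is a set $(a_1,b_1)\times\dots\times(a_n,b_n)$ with $a_i<b_i$ in $R$. Linear maps: a linear (affine) map $R^m\to R$ is $x\mapsto\lambda_1x_1+\dots+\lambda_mx_m+a$ with $\lambda_i\in\Lambda$, $a\in R$. For $X\subseteq R^{m}$ and $f,g$ each either a linear map or one of the constant functions $\pm\infty$, with $f<g$ on $X$, put $(f,g)_X=\{(x,y)\in X\times R: f(x)<y<g(x)\}$ and let $\Gamma(f)_X$ be the graph of $f$ restricted to $X$; values at points outside $X$ are those of the linear map. Linear cells: $C\subseteq R$ is a linear cell if it is a singleton or an open interval with endpoints in $R\cup\{\pm\infty\}$; for $n>1$, $C\subseteq R^n$ is a linear cell if $C=\Gamma(f)_X$ with $f$ linear, or $C=(f,g)_X$ with $f,g$ linear or $\pm\infty$, $f<g$ on $X$, where $X\subseteq R^{n-1}$ is a linear cell. Linear decompositions: a linear decomposition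 of $R$ is a finite partition of $R$ into linear cells; for $n>1$ a linear decomposition of $R^n$ is a finite partition $\mathcal C$ of $R^n$ into linear cells such that $\pi(\mathcal C)=\{\pi(D):D\in\mathcal C\}$ is a linear decomposition of $R^{n-1}$. For definable $Y\subseteq R^n$, a linear decomposition of $Y$ is $\{D\cap Y: D\in\mathcal C\}\setminus\{\emptyset\}$ for a linear decomposition $\mathcal C$ of $R^n$ each of whose members is contained in or disjoint from $Y$. Special linear decompositions are defined recursively: every linear decomposition of a subset of $R$ is special; for $n>1$ a linear decomposition $\mathcal C$ of $Y\subseteq R^n$ is special if (1) $\pi(\mathcal C)$ is a special linear decomposition of $\pi(Y)$; (2) for every two cells $\Gamma(f)_S,\Gamma(g)_T\in\mathcal C$ and every $V\in\pi(\mathcal C)$, one has $f<g$ on $V$, or $f=g$ on $V$, or $f>g$ on $V$; (3) for every two cells $\Gamma(h)_S,(f,g)_T\in\mathcal C$ there is no $c\in cl(S)\cap cl(T)$ with $f(c)<h(c)<g(c)$. *)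

(* Defs.v *)
From Stdlib Require Import List.
From HB Require Import structures.
From mathcomp Require Import all_boot all_order all_algebra.
Set Implicit Arguments. Unset Strict Implicit. Unset Printing Implicit Defensive.
Import Order.TTheory GRing.Theory Num.Theory.
Local Open Scope ring_scope.

(** Ordered division ring: a unit ring Λ in which every nonzero element is
    invertible, with a positive cone posL (x < y :<-> posL (y - x)). *)
Definition ordered_division_ring (L : unitRingType) (posL : pred L) : Prop :=
  [/\ forall x : L, x != 0 -> x \is a GRing.unit,
      forall x y : L, posL x -> posL y -> posL (x + y),
      forall x y : L, posL x -> posL y -> posL (x * y),
      forall x : L, x = 0 \/ posL x \/ posL (- x) &
      forall x : L, ~ (posL x /\ posL (- x))].

Definition ordered_vspace (L : unitRingType) (posL : pred L)
    (R : lmodType L) (posR : pred R) : Prop :=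
  [/\ forall x y : R, posR x -> posR y -> posR (x + y),
      forall x : R, x = 0 \/ posR x \/ posR (- x),
      forall x : R, ~ (posR x /\ posR (- x)) &
      forall (l : L) (x : R), posL l -> posR x -> posR (l *: x)].

Inductive ext (T : Type) := NInf | Fin of T | PInf.
Arguments NInf {T}.
Arguments PInf {T}.
Arguments Fin {T} _.

Inductive cell1 (T : Type) := C1Pt of T | C1Int of ext T & ext T.

(** linear (affine) maps R^m -> R : coefficients λ_i and constant a *)
Definition lin (L : unitRingType) (R : lmodType L) (m : nat) :=
  ('rV[L]_m * R)%type.

Inductive shape (L : unitRingType) (R : lmodType L) (m : nat) :=
  | SGraph of lin R m
  | SBand of ext (lin R m) & ext (lin R m).

(** cdesc R n : descriptions of linear cells in R^(n+1) *)
Fixpoint cdesc (L : unitRingType) (R : lmodType L) (n : nat) : Type :=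
  match n with
  | 0 => cell1 R
  | k.+1 => (cdesc R k * shape R k.+1)%type
  end.

Section OVS.
Variable L : unitRingType.
Variable R : lmodType L.
Variable posR : pred R.

Definition ltR (x y : R) : Prop := posR (y - x).

Definition ltE (a b : ext R) : Prop :=
  match a, b with
  | NInf, NInf => False
  | NInf, _ => True
  | Fin x, Fin y => ltR x y
  | Fin _, PInf => True
  | Fin _, NInf => False
  | PInf, _ => False
  end.

Definition projv n (x : 'rV[R]_n.+1) : 'rV[R]_n :=
  \row_(i < n) x 0 (widen_ord (leqnSn n) i).
Definition lastc n (x : 'rV[R]_n.+1) : R := x 0 ord_max.

Definition evl m (f : lin R m) (x : 'rV[R]_m) : R :=
  \sum_(i < m) f.1 0 i *: x 0 i + f.2.

Definition evx m (f : ext (lin R m)) (x : 'rV[R]_m) : ext R :=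
  match f with NInf => NInf | Fin g => Fin (evl g x) | PInf => PInf end.

Fixpoint csem n : cdesc R n -> 'rV[R]_n.+1 -> Prop :=
  match n return cdesc R n -> 'rV[R]_n.+1 -> Prop with
  | 0 => fun c x =>
      match c with
      | C1Pt a => x 0 0 = a
      | C1Int a b => ltE a (Fin (x 0 0)) /\ ltE (Fin (x 0 0)) b
      end
  | k.+1 => fun c x =>
      csem c.1 (projv x) /\
      match c.2 with
      | SGraph f => lastc x = evl f (projv x)
      | SBand f g => ltE (evx f (projv x)) (Fin (lastc x)) /\
                     ltE (Fin (lastc x)) (evx g (projv x))
      end
  end.

Fixpoint cvalid n : cdesc R n -> Prop :=
  match n return cdesc R n -> Prop with
  | 0 => fun c => match c with C1Pt _ => True | C1Int a b => ltE a b end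
  | k.+1 => fun c =>
      cvalid c.1 /\
      match c.2 with
      | SGraph _ => True
      | SBand f g => forall x, csem c.1 x -> ltE (evx f x) (evx g x)
      end
  end.

Definition cells_partition n (cs : seq (cdesc R n)) : Prop :=
  [/\ forall c, In c cs -> cvalid c,
      forall x, exists c, In c cs /\ csem c x &
      forall c1 c2 x, In c1 cs -> In c2 cs -> csem c1 x -> csem c2 x ->
        forall y, csem c1 y <-> csem c2 y].

(** linear decomposition of R^(n+1); π(C) is the list of base cells *)
Fixpoint lindec n : seq (cdesc R n) -> Prop :=
  match n return seq (cdesc R n) -> Prop with
  | 0 => fun cs => cells_partition cs
  | k.+1 => fun cs =>
      cells_partition cs /\ lindec (map (fun c : cdesc R k.+1 => c.1) cs)
  end.

Definition lindec_of n (cs : seq (cdesc R n)) (Y : 'rV[R]_n.+1 -> Prop) : Prop :=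
  exists cs' : seq (cdesc R n),
    [/\ lindec cs',
        forall c', In c' cs' ->
          (forall x, csem c' x -> Y x) \/ (forall x, csem c' x -> ~ Y x),
        forall c, In c cs ->
          [/\ In c cs', exists x, csem c x & forall x, csem c x -> Y x] &
        forall c', In c' cs' -> (exists x, csem c' x /\ Y x) -> In c' cs].

Definition projset n (Y : 'rV[R]_n.+1 -> Prop) : 'rV[R]_n -> Prop :=
  fun z => exists x, Y x /\ projv x = z.

(** closure in the product of the order topology (basic opens: products of
    open intervals/rays with endpoints in R ∪ {±∞}) *)
Definition closure m (S : 'rV[R]_m -> Prop) (x : 'rV[R]_m) : Prop :=
  forall a b : 'I_m -> ext R,
    (forall i, ltE (a i) (Fin (x 0 i)) /\ ltE (Fin (x 0 i)) (b i)) ->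
    exists y, S y /\ forall i, ltE (a i) (Fin (y 0 i)) /\ ltE (Fin (y 0 i)) (b i).

Definition special_cond2 k (cs : seq (cdesc R k.+1)) : Prop :=
  forall (c1 c2 c3 : cdesc R k.+1) (f g : lin R k.+1),
    In c1 cs -> In c2 cs -> In c3 cs ->
    c1.2 = SGraph f -> c2.2 = SGraph g ->
    (forall x, csem c3.1 x -> ltR (evl f x) (evl g x)) \/
    (forall x, csem c3.1 x -> evl f x = evl g x) \/
    (forall x, csem c3.1 x -> ltR (evl g x) (evl f x)).

Definition special_cond3 k (cs : seq (cdesc R k.+1)) : Prop :=
  forall (c1 c2 : cdesc R k.+1) (h : lin R k.+1) (f g : ext (lin R k.+1)),
    In c1 cs -> In c2 cs ->
    c1.2 = SGraph h -> c2.2 = SBand f g ->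
    ~ exists x, [/\ closure (csem c1.1) x, closure (csem c2.1) x,
                   ltE (evx f x) (Fin (evl h x)) & ltE (Fin (evl h x)) (evx g x)].

Fixpoint special n : seq (cdesc R n) -> ('rV[R]_n.+1 -> Prop) -> Prop :=
  match n return seq (cdesc R n) -> ('rV[R]_n.+1 -> Prop) -> Prop with
  | 0 => fun cs Y => lindec_of cs Y
  | k.+1 => fun cs Y =>
      [/\ lindec_of cs Y,
          special (map (fun c : cdesc R k.+1 => c.1) cs) (projset Y),
          special_cond2 cs & special_cond3 cs]
  end.

Definition is_box n (a b : 'rV[R]_n) : Prop := forall i, ltR (a 0 i) (b 0 i).
Definition box n (a b : 'rV[R]_n) (x : 'rV[R]_n) : Prop :=
  forall i, ltR (a 0 i) (x 0 i) /\ ltR (x 0 i) (b 0 i).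

End OVS.

(* Main.v *)
Require Import Defs.
From Stdlib Require Import List ClassicalEpsilon.
From HB Require Import structures.
From mathcomp Require Import all_boot all_order all_algebra.
Import GRing.Theory.
Set Implicit Arguments. Unset Strict Implicit. Unset Printing Implicit Defensive.
Local Open Scope ring_scope.

Section Main.
Variable L : unitRingType.
Variable posL : pred L.
Variable R : lmodType L.
Variable posR : pred R.
Hypothesis HL : ordered_division_ring posL.
Hypothesis HR : ordered_vspace posL posR.

Local Notation ltR := (ltR posR).
Local Notation projv := Defs.projv.
Local Notation shape := Defs.shape.
Definition leR (x y : R) := x = y \/ ltR x y.

Lemma posR_add x y : posR x -> posR y -> posR (x + y).
Proof. by case: HR => H _ _ _; apply: H. Qed.
Lemma posR_tri x : x = 0 \/ posR x \/ posR (- x).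
Proof. by case: HR => _ H _ _; apply: H. Qed.
Lemma posR_anti x : posR x -> posR (- x) -> False.
Proof. by case: HR => _ _ H _ ? ?; apply: (H x). Qed.
Lemma posR_scale l x : posL l -> posR x -> posR (l *: x).
Proof. by case: HR => _ _ _ H; apply: H. Qed.

Lemma ltR_irr x : ~ ltR x x.
Proof. rewrite /Defs.ltR subrr => H; apply: (posR_anti H); by rewrite oppr0. Qed.
Lemma ltR_trans x y z : ltR x y -> ltR y z -> ltR x z.
Proof.
rewrite /Defs.ltR => H1 H2; have := posR_add H2 H1.
by rewrite addrA subrK.
Qed.
Lemma ltR_asym x y : ltR x y -> ltR y x -> False.
Proof. move=> H1 H2; exact: (ltR_irr (ltR_trans H1 H2)). Qed.
Lemma ltR_tot x y : x = y \/ ltR x y \/ ltR y x.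
Proof.
rewrite /Defs.ltR; case: (posR_tri (y - x)) => [/eqP|[H|H]].
- by rewrite subr_eq0 => /eqP ->; left.
- by right; left.
- by right; right; rewrite opprB in H.
Qed.
Lemma ltR_add x y z w : ltR x y -> ltR z w -> ltR (x + z) (y + w).
Proof.
rewrite /Defs.ltR => H1 H2; have := posR_add H1 H2.
by rewrite opprD addrACA.
Qed.
Lemma ltR_addr x y z : ltR x y -> ltR (x + z) (y + z).
Proof. by rewrite /Defs.ltR opprD addrACA subrr addr0. Qed.

Lemma leR_refl x : leR x x. Proof. by left. Qed.
Lemma le_lt_trans x y z : leR x y -> ltR y z -> ltR x z.
Proof. by case=> [->//|H1 H2]; exact: ltR_trans H1 H2. Qed.
Lemma lt_le_trans x y z : ltR x y -> leR y z -> ltR x z.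
Proof. by move=> H1 [<-//|H2]; exact: ltR_trans H1 H2. Qed.
Lemma leR_trans x y z : leR x y -> leR y z -> leR x z.
Proof.
case=> [->//|H1] H2; right; exact: lt_le_trans H1 H2.
Qed.
Lemma leR_add x y z w : leR x y -> leR z w -> leR (x + z) (y + w).
Proof.
case=> [->|H1]; case=> [->|H2]; first by left.
- by right; rewrite ![y + _]addrC; apply: ltR_addr.
- by right; apply: ltR_addr.
- by right; apply: ltR_add.
Qed.
Lemma leR_max x y : exists m, leR x m /\ leR y m.
Proof.
case: (ltR_tot x y) => [->|[H|H]].
- by exists y; split; left.
- by exists y; split; [right|left].
- by exists x; split; [left|right].
Qed.
Lemma leR_min x y : exists m, leR m x /\ leR m y.
Proof.
case: (ltR_tot x y) => [->|[H|H]].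
- by exists y; split; left.
- by exists x; split; [left|right].
- by exists y; split; [right|left].
Qed.
Lemma ltR_sub_pos x y e : leR x y -> posR e -> ltR (x - e) y.
Proof.
move=> H He; apply: lt_le_trans _ H.
by rewrite /Defs.ltR opprB addrC subrK.
Qed.
Lemma ltR_add_pos x y e : leR y x -> posR e -> ltR y (x + e).
Proof.
move=> H He; apply: le_lt_trans H _.
by rewrite /Defs.ltR [x + e]addrC addrK.
Qed.

Lemma posL_add x y : posL x -> posL y -> posL (x + y).
Proof. by case: HL => _ H _ _ _; apply: H. Qed.
Lemma posL_mul x y : posL x -> posL y -> posL (x * y).
Proof. by case: HL => _ _ H _ _; apply: H. Qed.
Lemma posL_tri x : x = 0 \/ posL x \/ posL (- x).
Proof. by case: HL => _ _ _ H _; apply: H. Qed.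
Lemma posL_anti x : posL x -> posL (- x) -> False.
Proof. by case: HL => _ _ _ _ H ? ?; apply: (H x). Qed.
Lemma posL_unit (x : L) : x != 0 -> x \is a GRing.unit.
Proof. by case: HL => H _ _ _ _; apply: H. Qed.

Lemma posL_neq0 (x : L) : posL x -> x != 0.
Proof. by move=> H; apply/eqP => E; subst; apply: (posL_anti H); rewrite oppr0. Qed.

Lemma posL1 : posL 1.
Proof.
case: (posL_tri 1) => [/eqP|[//|H]]; first by rewrite oner_eq0.
have := posL_mul H H; rewrite mulrNN mulr1 => H1.
by case: (posL_anti H1 H).
Qed.

Definition half : L := (1 + 1)^-1.
Lemma half_pos : posL half.
Proof.
have P2 : posL (1 + 1) by apply: posL_add; exact: posL1.
have U := posL_unit (posL_neq0 P2).
have E : half * (1 + 1) = 1 by rewrite /half mulVr.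
case: (posL_tri half) => [H|[//|H]].
- by move: E; rewrite H mul0r => /eqP; rewrite eq_sym oner_eq0.
- have := posL_mul H P2; rewrite mulNr E => H1.
  by case: (posL_anti posL1 H1).
Qed.
Lemma half_half : half + half = 1.
Proof.
have P2 : posL (1 + 1) by apply: posL_add; exact: posL1.
have U := posL_unit (posL_neq0 P2).
by rewrite -{1 2}(mulr1 half) -mulrDr /half mulVr.
Qed.

Lemma midpoint x y : ltR x y -> exists t, ltR x t /\ ltR t y.
Proof.
rewrite /Defs.ltR => H; exists (x + half *: (y - x)); split.
- by rewrite addrC addKr; apply: posR_scale => //; exact: half_pos.
- have -> : y - (x + half *: (y - x)) = half *: (y - x).
    have E : y - x = half *: (y - x) + half *: (y - x) by rewrite -scalerDl half_half scale1r.
    rewrite opprD addrA; move: E; set d := y - x => E.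
    by rewrite {1}E addrK.
  by apply: posR_scale => //; exact: half_pos.
Qed.


Lemma In_map_iff (A B : Type) (f : A -> B) (s : seq A) y :
  In y (map f s) <-> exists x, f x = y /\ In x s.
Proof.
elim: s => [|x s IH] /=; first by split=> [[]|[? [_ []]]].
split.
- case=> [<-|/IH [z [<- H]]]; first by exists x; split; [|left].
  by exists z; split; [|right].
- case=> z [E [->|H]]; first by left.
  by right; apply/IH; exists z.
Qed.
Lemma In_map (A B : Type) (f : A -> B) (s : seq A) x : In x s -> In (f x) (map f s).
Proof. by move=> H; apply/In_map_iff; exists x. Qed.
Lemma In_filter (A : Type) (p : pred A) (s : seq A) x :
  In x (filter p s) <-> In x s /\ p x.
Proof.
elim: s => [|y s IH] /=; first by split=> [[]|[[]]].
case Py: (p y) => /=.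
- split; first by case=> [<-|/IH [? ?]]; [split; [left|]|split; [right|]].
  by case=> [[->|H] Px]; [left|right; apply/IH].
- rewrite IH; split; first by case=> ? ?; split; [right|].
  by case=> [[E|H] Px]; [subst; rewrite Py in Px|].
Qed.
Lemma In_cat (A : Type) (s1 s2 : seq A) x : In x (s1 ++ s2) <-> In x s1 \/ In x s2.
Proof.
elim: s1 => [|y s IH] /=; first by split=> [|[[]|]]; [right|].
rewrite IH; tauto.
Qed.
Lemma In_flatten (A : Type) (ss : seq (seq A)) x :
  In x (flatten ss) <-> exists s, In s ss /\ In x s.
Proof.
elim: ss => [|s ss IH] /=; first by split=> [[]|[? [[] _]]].
rewrite In_cat IH; split.
- by case=> [H|[t [H1 H2]]]; [exists s; split; [left|]|exists t; split; [right|]].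
- by case=> t [[<-|H1] H2]; [left|right; exists t].
Qed.

Lemma ord_split k (i : 'I_k.+2) :
  (exists j : 'I_k.+1, i = widen_ord (leqnSn k.+1) j) \/ i = ord_max.
Proof.
case: (ltnP i k.+1) => H.
- by left; exists (Ordinal H); apply: val_inj.
- right; apply: val_inj => /=; have := ltn_ord i; rewrite ltnS => H2.
  by apply/eqP; rewrite eqn_leq H H2.
Qed.

Lemma projvE k (x : 'rV[R]_k.+2) (j : 'I_k.+1) : projv x 0 j = x 0 (widen_ord (leqnSn k.+1) j).
Proof. by rewrite /projv mxE. Qed.

Lemma box_split k (a b x : 'rV[R]_k.+2) :
  box posR a b x <-> box posR (projv a) (projv b) (projv x) /\
    ltR (lastc a) (lastc x) /\ ltR (lastc x) (lastc b).
Proof.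
split.
- move=> H; split; last by apply: H.
  by move=> j; rewrite !projvE; apply: H.
- case=> [H1 H2] i; case: (ord_split i) => [[j ->]|->]; last by [].
  by have := H1 j; rewrite !projvE.
Qed.

Lemma is_box_split k (a b : 'rV[R]_k.+2) :
  is_box posR a b <-> is_box posR (projv a) (projv b) /\ ltR (lastc a) (lastc b).
Proof.
split.
- move=> H; split; last by apply: H.
  by move=> j; rewrite !projvE; apply: H.
- case=> [H1 H2] i; case: (ord_split i) => [[j ->]|->]; last by [].
  by have := H1 j; rewrite !projvE.
Qed.

Lemma box0 (a b x : 'rV[R]_1) :
  box posR a b x <-> ltR (a 0 0) (x 0 0) /\ ltR (x 0 0) (b 0 0).
Proof. by split=> [H|H i]; [apply: H|rewrite (ord1 i)]. Qed.

Definition extr k (y : 'rV[R]_k.+1) (t : R) : 'rV[R]_k.+2 :=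
  \row_(i < k.+2) (if (i < k.+1)%N then y 0 (inord i) else t).

Lemma projv_extr k (y : 'rV[R]_k.+1) t : projv (extr y t) = y.
Proof.
apply/rowP => j; rewrite projvE /extr mxE /= ltn_ord.
by congr (y 0 _); apply: val_inj; rewrite /= inordK.
Qed.
Lemma lastc_extr k (y : 'rV[R]_k.+1) t : lastc (extr y t) = t.
Proof. by rewrite /lastc mxE /= ltnn. Qed.

Lemma box_extr k (a b y : 'rV[R]_k.+1) (la lb t : R) :
  box posR (extr a la) (extr b lb) (extr y t) <->
  box posR a b y /\ ltR la t /\ ltR t lb.
Proof. by rewrite box_split !projv_extr !lastc_extr. Qed.

Definition constl m (a : R) : lin R m := (0, a).
Lemma evl_const m (a : R) (x : 'rV[R]_m) : evl (constl m a) x = a.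
Proof.
rewrite /evl /constl /= big1 ?add0r // => i _.
by rewrite mxE scale0r.
Qed.


Local Notation ltE := (ltE posR).
Local Notation csem := (csem posR).
Local Notation cvalid := (cvalid posR).
Local Notation box := (box posR).
Local Notation evx := (evx (R:=R)).

Lemma ltE_fin_trans (u v : ext R) t : ltE u (Fin t) -> ltE (Fin t) v -> ltE u v.
Proof.
case: u => [|u|] //; case: v => [|v|] //=; exact: ltR_trans.
Qed.

Definition maxE (a : R) (x : ext R) : ext R :=
  match x with NInf => Fin a | Fin y => if posR (y - a) then Fin y else Fin a | PInf => PInf end.
Definition minE (b : R) (y : ext R) : ext R :=
  match y with NInf => NInf | Fin z => if posR (b - z) then Fin z else Fin b | PInf => Fin b end.

Lemma maxE_lt a x z : ltE (maxE a x) (Fin z) <-> ltR a z /\ ltE x (Fin z).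
Proof.
case: x => [|y|] /=; try tauto.
case H: (posR (y - a)) => /=.
- split=> [Hy|[]//]; split=> //; exact: ltR_trans H Hy.
- split=> [Ha|[]//]; split=> //.
  case: (ltR_tot y a) => [->//|[H'|H']]; first exact: ltR_trans H' Ha.
  by rewrite /Defs.ltR H in H'.
Qed.
Lemma minE_lt b y z : ltE (Fin z) (minE b y) <-> ltR z b /\ ltE (Fin z) y.
Proof.
case: y => [|y|] /=; try tauto.
case H: (posR (b - y)) => /=.
- split=> [Hy|[]//]; split=> //; exact: ltR_trans Hy H.
- split=> [Ha|[]//]; split=> //.
  case: (ltR_tot y b) => [->//|[H'|H']]; last exact: ltR_trans Ha H'.
  by rewrite /Defs.ltR H in H'.
Qed.

Definition lowE m (a : R) (f : ext (lin R m)) : ext (lin R m) :=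
  match f with NInf => Fin (constl m a) | _ => f end.
Definition upE m (b : R) (g : ext (lin R m)) : ext (lin R m) :=
  match g with PInf => Fin (constl m b) | _ => g end.
Definition cutS m (a b : R) (s : shape R m) : shape R m :=
  match s with SGraph f => SGraph f | SBand f g => SBand (lowE a f) (upE b g) end.

Fixpoint cut n : 'rV[R]_n.+1 -> 'rV[R]_n.+1 -> cdesc R n -> cdesc R n :=
  match n return 'rV[R]_n.+1 -> 'rV[R]_n.+1 -> cdesc R n -> cdesc R n with
  | 0 => fun a b c => match c with
                      | C1Pt p => C1Pt p
                      | C1Int x y => C1Int (maxE (a 0 0) x) (minE (b 0 0) y) end
  | k.+1 => fun a b c => (cut (projv a) (projv b) c.1, cutS (lastc a) (lastc b) c.2)
  end.

Definition shsem m (s : shape R m) (z : 'rV[R]_m) (t : R) : Prop :=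
  match s with
  | SGraph f => t = evl f z
  | SBand f g => ltE (evx f z) (Fin t) /\ ltE (Fin t) (evx g z)
  end.

Lemma csemS k (c : cdesc R k.+1) x :
  csem c x <-> csem c.1 (projv x) /\ shsem c.2 (projv x) (lastc x).
Proof. by case: c => c1 [f|f g]. Qed.

Lemma cvalidS k (c : cdesc R k.+1) :
  cvalid c <-> cvalid c.1 /\ (forall f g, c.2 = SBand f g ->
      forall x, csem c.1 x -> ltE (evx f x) (evx g x)).
Proof.
case: c => c1 [f|f g] /=; first by split=> [[? _]|[? _]].
split=> [[H1 H2]|[H1 H2]]; split=> //; last by apply: H2.
by move=> f' g' [<- <-].
Qed.

Definition bnd m (pa pb : 'rV[R]_m) (la lb : R) (f : lin R m) :=
  forall x, box pa pb x -> ltR la (evl f x) /\ ltR (evl f x) lb.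
Definition bndE m (pa pb : 'rV[R]_m) (la lb : R) (f : ext (lin R m)) :=
  match f with Fin g => bnd pa pb la lb g | _ => True end.
Definition topbnd m (pa pb : 'rV[R]_m) (la lb : R) (s : shape R m) :=
  match s with SGraph f => bnd pa pb la lb f | SBand f g => bndE pa pb la lb f /\ bndE pa pb la lb g end.

Fixpoint goodc n : 'rV[R]_n.+1 -> 'rV[R]_n.+1 -> cdesc R n -> Prop :=
  match n return 'rV[R]_n.+1 -> 'rV[R]_n.+1 -> cdesc R n -> Prop with
  | 0 => fun _ _ _ => True
  | k.+1 => fun a b c => topbnd (projv a) (projv b) (lastc a) (lastc b) c.2 /\
                         goodc (projv a) (projv b) c.1
  end.

Definition ne n (a b : 'rV[R]_n.+1) (c : cdesc R n) := exists x, box a b x /\ csem c x.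
Definition neb n (a b : 'rV[R]_n.+1) (c : cdesc R n) : bool :=
  if excluded_middle_informative (ne a b c) then true else false.
Lemma nebP n (a b : 'rV[R]_n.+1) c : neb a b c <-> ne a b c.
Proof. by rewrite /neb; case: excluded_middle_informative. Qed.

Definition ds n (a b : 'rV[R]_n.+1) (cs : seq (cdesc R n)) :=
  map (cut a b) (filter (neb a b) cs).

Lemma shape_cut m (pa pb : 'rV[R]_m) la lb s z t :
  topbnd pa pb la lb s -> box pa pb z ->
  (shsem (cutS la lb s) z t <-> (ltR la t /\ ltR t lb) /\ shsem s z t).
Proof.
case: s => [f|f g] /= Hb Hz.
- have [H1 H2] := Hb _ Hz; split; last by case.
  by move=> ->.
- case: Hb => Hf Hg.
  have Ef : ltE (evx (lowE la f) z) (Fin t) <-> ltR la t /\ ltE (evx f z) (Fin t).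
    case: f Hf => [|f|] /= Hf; rewrite ?evl_const; try tauto.
    have [H1 _] := Hf _ Hz; split=> [H|[]//]; split=> //; exact: ltR_trans H1 H.
  have Eg : ltE (Fin t) (evx (upE lb g) z) <-> ltR t lb /\ ltE (Fin t) (evx g z).
    case: g Hg => [|g|] /= Hg; rewrite ?evl_const; try tauto.
    have [_ H1] := Hg _ Hz; split=> [H|[]//]; split=> //; exact: ltR_trans H H1.
  rewrite -/(ltE (Fin t) (evx g z)) -/(ltE (Fin t) (evx (upE lb g) z)) Ef Eg; tauto.
Qed.

Lemma cut_sem n (a b : 'rV[R]_n.+1) c :
  goodc a b c -> ne a b c -> forall x, csem (cut a b c) x <-> box a b x /\ csem c x.
Proof.
elim: n a b c => [|k IH] a b c.
- case: c => [p|u v] _ Hne x /=; rewrite box0.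
  + case: Hne => y [/box0 Hb /= Hy]; split; last by case.
    by move=> Hx; rewrite Hx -Hy.
  + have E1 := maxE_lt (a 0 0) u (x 0 0); have E2 := minE_lt (b 0 0) v (x 0 0).
    simpl in E1, E2 |- *; tauto.
- case=> Ht Hg Hne x.
  have Hne1 : ne (projv a) (projv b) c.1.
    case: Hne => y [/box_split [Hb _] /csemS [Hy _]]; by exists (projv y).
  rewrite csemS IH // box_split; split.
  + case=> [[Hb Hc] Hs]; have E := (shape_cut (lastc x) Ht Hb). move/E: Hs; rewrite csemS; tauto.
  + case=> [[Hb Hl] /csemS [Hc Hs]]; split=> //.
    by apply/(shape_cut _ Ht Hb).
Qed.

Lemma fiber k (a b : 'rV[R]_k.+2) (c : cdesc R k.+1) z :
  goodc a b c -> cvalid c -> ltR (lastc a) (lastc b) ->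
  box (projv a) (projv b) z -> csem c.1 z ->
  exists t, ltR (lastc a) t /\ ltR t (lastc b) /\ shsem c.2 z t.
Proof.
case: c => c1 s [Ht _] /cvalidS [_ Hv] Hab Hz Hc /=.
move: Ht Hv; set la := lastc a; set lb := lastc b; rewrite /= in Hc.
case: s => [f|f g] /= Ht Hv.
- have [H1 H2] := Ht _ Hz; by exists (evl f z).
- have := Hv _ _ erefl _ Hc; clear Hv; case: Ht => Hf Hg'.
  case: f Hf => [|f|] /= Hf; case: g Hg' => [|g|] /= Hg' //= H.
  + have [H1 H2] := Hg' _ Hz; have [t [T1 T2]] := midpoint H1.
    exists t; repeat split => //; exact: ltR_trans T2 H2.
  + have [t [T1 T2]] := midpoint Hab; by exists t.
  + have [H1 H2] := Hf _ Hz; have [H3 H4] := Hg' _ Hz.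
    have [t [T1 T2]] := midpoint H.
    exists t; repeat split => //; [exact: ltR_trans H1 T1|exact: ltR_trans T2 H4].
  + have [H1 H2] := Hf _ Hz; have [t [T1 T2]] := midpoint H2.
    exists t; repeat split => //; exact: ltR_trans H1 T1.
Qed.

Lemma fiber_pt k (a b : 'rV[R]_k.+2) (c : cdesc R k.+1) z :
  goodc a b c -> cvalid c -> ltR (lastc a) (lastc b) ->
  box (projv a) (projv b) z -> csem c.1 z ->
  exists x, [/\ box a b x, csem c x & projv x = z].
Proof.
move=> Hg Hv Hab Hz Hc; have [t [T1 [T2 T3]]] := fiber Hg Hv Hab Hz Hc.
exists (extr z t); split; last exact: projv_extr.
- by apply/box_split; rewrite !projv_extr !lastc_extr.
- by apply/csemS; rewrite !projv_extr !lastc_extr.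
Qed.

Lemma ne_iff k (a b : 'rV[R]_k.+2) (c : cdesc R k.+1) :
  goodc a b c -> cvalid c -> ltR (lastc a) (lastc b) ->
  ne a b c <-> ne (projv a) (projv b) c.1.
Proof.
move=> Hg Hv Hab; split.
- by case=> y [/box_split [Hb _] /csemS [Hy _]]; exists (projv y).
- case=> z [Hz Hc]; have [x [? ? _]] := fiber_pt Hg Hv Hab Hz Hc; by exists x.
Qed.

Lemma cut_valid n (a b : 'rV[R]_n.+1) c :
  goodc a b c -> cvalid c -> ne a b c -> cvalid (cut a b c).
Proof.
elim: n a b c => [|k IH] a b c.
- case: c => [p|u v] //= _ _ [y [/box0 Hb /= [Hu Hv]]].
  apply: (@ltE_fin_trans _ _ (y 0 0)); [apply/maxE_lt|apply/minE_lt]; tauto.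
- move=> Hg Hv Hne; case: (Hg) => Ht Hg1; case/cvalidS: (Hv) => Hv1 Hv2.
  have Hab : ltR (lastc a) (lastc b).
    by case: Hne => y [/box_split [_ [H1 H2]] _]; exact: ltR_trans H1 H2.
  have Hne1 := (iffLR (ne_iff Hg Hv Hab) Hne).
  apply/cvalidS; split; first exact: IH.
  move=> f' g' /= E z /(cut_sem Hg1 Hne1) [Hz Hc].
  have [t [T1 [T2 T3]]] := fiber Hg Hv Hab Hz Hc.
  have := iffRL (shape_cut t Ht Hz) (conj (conj T1 T2) T3).
  rewrite E /=; case=> H1 H2; exact: ltE_fin_trans H1 H2.
Qed.


Local Notation cells_partition := (cells_partition posR).
Local Notation lindec := (lindec posR).

Lemma ltR3 x y z : ltR x y -> ltR y z -> ltR z x -> False.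
Proof. move=> H1 H2 H3; exact: ltR_asym (ltR_trans H1 H2) H3. Qed.

Lemma part_eq n (l1 l2 : seq (cdesc R n)) :
  (forall c, In c l1 <-> In c l2) -> cells_partition l1 -> cells_partition l2.
Proof.
move=> E [H1 H2 H3]; split.
- by move=> c /E; apply: H1.
- by move=> x; case: (H2 x) => c [/E ? ?]; exists c.
- by move=> c1 c2 x /E ? /E ?; apply: H3.
Qed.

Lemma lindec_eq n (l1 l2 : seq (cdesc R n)) :
  (forall c, In c l1 <-> In c l2) -> lindec l1 -> lindec l2.
Proof.
elim: n l1 l2 => [|k IH] l1 l2 E /=; first exact: part_eq.
case=> H1 H2; split; first exact: part_eq H1.
apply: IH H2 => c; rewrite !In_map_iff; split; case=> d [<- /E ?]; by exists d.
Qed.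

Lemma lindec_part n (l : seq (cdesc R n)) : lindec l -> cells_partition l.
Proof. by case: n l => [|k] l //= []. Qed.

Lemma ds_In n (a b : 'rV[R]_n.+1) C e :
  In e (ds a b C) <-> exists c, [/\ e = cut a b c, In c C & ne a b c].
Proof.
rewrite /ds In_map_iff; split.
- by case=> c [<- /In_filter [H1 /nebP H2]]; exists c.
- by case=> c [-> H1 H2]; exists c; split=> //; apply/In_filter; split=> //; apply/nebP.
Qed.

Lemma ds_sem n (a b : 'rV[R]_n.+1) C e x :
  (forall c, In c C -> goodc a b c) -> In e (ds a b C) -> csem e x -> box a b x.
Proof.
move=> G /ds_In [c [-> Hc Hne]] /(cut_sem (G _ Hc) Hne); tauto.
Qed.

Lemma ds_fst k (a b : 'rV[R]_k.+2) (C : seq (cdesc R k.+1)) :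
  (forall c, In c C -> goodc a b c /\ cvalid c) -> ltR (lastc a) (lastc b) ->
  forall e, In e (map (fun c : cdesc R k.+1 => c.1) (ds a b C)) <->
            In e (ds (projv a) (projv b) (map (fun c : cdesc R k.+1 => c.1) C)).
Proof.
move=> G Hab e; rewrite In_map_iff ds_In; split.
- case=> d [<- /ds_In [c [-> Hc Hne]]]; exists c.1; split=> //.
  + by apply: In_map.
  + by case: (G _ Hc) => g v; apply/(ne_iff g v Hab).
- case=> c1 [-> /In_map_iff [c [E Hc]] Hne]; subst c1.
  exists (cut a b c); split=> //; apply/ds_In; exists c; split=> //.
  by case: (G _ Hc) => g v; apply/(ne_iff g v Hab).
Qed.

Definition zone k (e : cdesc R k) (la lb : R) : seq (cdesc R k.+1) :=
  [:: (e, SBand NInf (Fin (constl k.+1 la))); (e, SGraph (constl k.+1 la));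
      (e, SGraph (constl k.+1 lb)); (e, SBand (Fin (constl k.+1 lb)) PInf)].

Fixpoint Oc n : 'rV[R]_n.+1 -> 'rV[R]_n.+1 -> seq (cdesc R n) -> seq (cdesc R n) :=
  match n return 'rV[R]_n.+1 -> 'rV[R]_n.+1 -> seq (cdesc R n) -> seq (cdesc R n) with
  | 0 => fun a b _ => [:: C1Int NInf (Fin (a 0 0)); C1Pt (a 0 0); C1Pt (b 0 0);
                         C1Int (Fin (b 0 0)) PInf]
  | k.+1 => fun a b C =>
      map (fun e => (e, SBand NInf PInf) : cdesc R k.+1)
          (Oc (projv a) (projv b) (map (fun c : cdesc R k.+1 => c.1) C)) ++
      flatten (map (fun e => zone e (lastc a) (lastc b))
                   (ds (projv a) (projv b) (map (fun c : cdesc R k.+1 => c.1) C)))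
  end.

Lemma zone_In k (f : cdesc R k) la lb e :
  In e (zone f la lb) -> e.1 = f /\
    forall z t, shsem e.2 z t ->
      [\/ e.2 = SBand NInf (Fin (constl k.+1 la)) /\ ltR t la,
          e.2 = SGraph (constl k.+1 la) /\ t = la,
          e.2 = SGraph (constl k.+1 lb) /\ t = lb |
          e.2 = SBand (Fin (constl k.+1 lb)) PInf /\ ltR lb t].
Proof.
case=> [<-|[<-|[<-|[<-|[]]]]]; split=> // z t /=; rewrite ?evl_const.
- by case=> _ H; constructor 1.
- by move=> H; constructor 2.
- by move=> H; constructor 3.
- by case=> H _; constructor 4.
Qed.

Lemma zone_eq k (f1 f2 : cdesc R k) la lb e1 e2 z1 z2 t :
  ltR la lb -> In e1 (zone f1 la lb) -> In e2 (zone f2 la lb) ->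
  shsem e1.2 z1 t -> shsem e2.2 z2 t -> e1.2 = e2.2.
Proof.
move=> Hab /zone_In [_ E1] /zone_In [_ E2] /E1 H1 /E2 H2.
case: H1 => [] [-> T1]; case: H2 => [] [-> T2] //; subst; exfalso;
  eauto using ltR3, ltR_asym, ltR_irr.
Qed.

Lemma Oc_out n (a b : 'rV[R]_n.+1) C e x :
  In e (Oc a b C) -> csem e x -> ~ box a b x.
Proof.
elim: n a b C e x => [|k IH] a b C e x.
- rewrite box0 /=; case=> [<-|[<-|[<-|[<-|[]]]]] /=.
  + case=> _ H [H1 _]; exact: ltR_asym H H1.
  + by move=> -> [H _]; exact: ltR_irr H.
  + by move=> -> [_ H]; exact: ltR_irr H.
  + case=> H _ [_ H1]; exact: ltR_asym H H1.
- case/In_cat.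
  + case/In_map_iff=> f [<- Hf] /csemS [Hc _] /box_split [Hb _].
    exact: (IH _ _ _ _ _ Hf Hc Hb).
  + case/In_flatten=> s [/In_map_iff [f [<- Hf]] He] /csemS [_ Hs] /box_split [_ [T1 T2]].
    case/zone_In: He => _ /(_ (projv x) (lastc x)) E; case/E: Hs => [] [_ T].
    * exact: ltR_asym T T1.
    * by rewrite T in T1; exact: ltR_irr T1.
    * by rewrite T in T2; exact: ltR_irr T2.
    * exact: ltR_asym T T2.
Qed.


Lemma part_combine n (a b : 'rV[R]_n.+1) (C O : seq (cdesc R n)) :
  cells_partition C -> (forall c, In c C -> goodc a b c) ->
  (forall e, In e O -> cvalid e) ->
  (forall e x, In e O -> csem e x -> ~ box a b x) ->
  (forall x, ~ box a b x -> exists e, In e O /\ csem e x) ->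
  (forall e1 e2 x, In e1 O -> In e2 O -> csem e1 x -> csem e2 x ->
     forall y, csem e1 y <-> csem e2 y) ->
  cells_partition (ds a b C ++ O).
Proof.
case=> CV CC CP G OV OO OC OP; split.
- move=> e /In_cat [/ds_In [c [-> Hc Hne]]|/OV //].
  exact: cut_valid (G _ Hc) (CV _ Hc) Hne.
- move=> x; case: (excluded_middle_informative (box a b x)) => Hb.
  + case: (CC x) => c [Hc Hx]; have Hne : ne a b c by exists x.
    exists (cut a b c); split.
    * by apply/In_cat; left; apply/ds_In; exists c.
    * by apply/(cut_sem (G _ Hc) Hne).
  + by case: (OC _ Hb) => e [He Hx]; exists e; split=> //; apply/In_cat; right.
- move=> e1 e2 x /In_cat [H1|H1] /In_cat [H2|H2] X1 X2.
  + case/ds_In: H1 X1 => c1 [-> Hc1 Hn1]; case/ds_In: H2 X2 => c2 [-> Hc2 Hn2].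
    move=> /(cut_sem (G _ Hc2) Hn2) [Hb Y2] /(cut_sem (G _ Hc1) Hn1) [_ Y1] y.
    rewrite (cut_sem (G _ Hc2) Hn2) (cut_sem (G _ Hc1) Hn1) (CP _ _ _ Hc1 Hc2 Y1 Y2 y).
    by [].
  + by case: (OO _ _ H2 X2); apply: ds_sem G H1 X1.
  + by case: (OO _ _ H1 X1); apply: ds_sem G H2 X2.
  + exact: OP H1 H2 X1 X2.
Qed.

Ltac kill_eqs :=
  repeat match goal with H : ?u = ?v |- _ => rewrite H in *; clear H end.

Lemma O0_facts (a b : 'rV[R]_1) (C : seq (cdesc R 0)) :
  is_box posR a b ->
  [/\ (forall e, In e (Oc a b C) -> cvalid e),
      (forall x, ~ box a b x -> exists e, In e (Oc a b C) /\ csem e x) &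
      (forall e1 e2 x, In e1 (Oc a b C) -> In e2 (Oc a b C) -> csem e1 x -> csem e2 x ->
        forall y, csem e1 y <-> csem e2 y)].
Proof.
move=> Hbox; have Hab : ltR (a 0 0) (b 0 0) by apply: Hbox.
split.
- by move=> e /= [<-|[<-|[<-|[<-|[]]]]].
- move=> x; rewrite box0 => Hb.
  case: (ltR_tot (x 0 0) (a 0 0)) => [E|[H|H]].
  + by exists (C1Pt (a 0 0)); split; [right; left|].
  + by exists (C1Int NInf (Fin (a 0 0))); split; [left|].
  + case: (ltR_tot (x 0 0) (b 0 0)) => [E|[H'|H']].
    * by exists (C1Pt (b 0 0)); split; [right; right; left|].
    * by case: Hb.
    * by exists (C1Int (Fin (b 0 0)) PInf); split; [right; right; right; left|].
- move=> e1 e2 x /= H1 H2; case: H1 => [<-|[<-|[<-|[<-|[]]]]];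
  case: H2 => [<-|[<-|[<-|[<-|[]]]]] //= X1 X2 y; try tauto; exfalso;
  move: X1 X2 Hab; move: (x 0 0) (a 0 0) (b 0 0) => t u v X1 X2 Hab;
  repeat match goal with H : _ /\ _ |- _ => case: H => ? ? end;
  subst; eauto using ltR3, ltR_asym, ltR_irr.
Qed.


Lemma Oc_S k (a b : 'rV[R]_k.+2) (C : seq (cdesc R k.+1)) :
  Oc a b C =
      map (fun e => (e, SBand NInf PInf) : cdesc R k.+1)
          (Oc (projv a) (projv b) (map (fun c : cdesc R k.+1 => c.1) C)) ++
      flatten (map (fun e => zone e (lastc a) (lastc b))
                   (ds (projv a) (projv b) (map (fun c : cdesc R k.+1 => c.1) C))).
Proof. by []. Qed.

Lemma Oc_inv k (a b : 'rV[R]_k.+2) (C : seq (cdesc R k.+1)) e :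
  In e (Oc a b C) ->
  (exists f, e = (f, SBand NInf PInf) /\
     In f (Oc (projv a) (projv b) (map (fun c : cdesc R k.+1 => c.1) C))) \/
  (exists f, In e (zone f (lastc a) (lastc b)) /\
     In f (ds (projv a) (projv b) (map (fun c : cdesc R k.+1 => c.1) C))).
Proof.
rewrite Oc_S => /In_cat [/In_map_iff [f [<- Hf]]|/In_flatten [s [/In_map_iff [f [<- Hf]] He]]].
- by left; exists f.
- by right; exists f.
Qed.

Lemma Ok_facts k (a b : 'rV[R]_k.+2) (C : seq (cdesc R k.+1)) :
  cells_partition (ds (projv a) (projv b) (map (fun c : cdesc R k.+1 => c.1) C) ++
                   Oc (projv a) (projv b) (map (fun c : cdesc R k.+1 => c.1) C)) ->
  (forall c, In c (map (fun c : cdesc R k.+1 => c.1) C) -> goodc (projv a) (projv b) c) ->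
  ltR (lastc a) (lastc b) ->
  [/\ (forall e, In e (Oc a b C) -> cvalid e),
      (forall x, ~ box a b x -> exists e, In e (Oc a b C) /\ csem e x) &
      (forall e1 e2 x, In e1 (Oc a b C) -> In e2 (Oc a b C) -> csem e1 x -> csem e2 x ->
        forall y, csem e1 y <-> csem e2 y)].
Proof.
set C0 := map _ C; set la := lastc a; set lb := lastc b.
case=> PV PC PP G0 Hab; split.
- move=> e /Oc_inv [[f [-> Hf]]|[f [He Hf]]].
  + apply/cvalidS; split; last by move=> f' g' [<- <-].
    by apply: PV; apply/In_cat; right.
  + have Vf : cvalid f by apply: PV; apply/In_cat; left.
    case: He => [<-|[<-|[<-|[<-|[]]]]]; apply/cvalidS; split=> //;
      by move=> f' g' //= [<- <-].
- move=> x Hb; case: (PC (projv x)) => f [/In_cat [Hf|Hf] Xf].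
  + have Hb0 := ds_sem G0 Hf Xf.
    have Hz : forall s, In (f, s) (zone f la lb) -> shsem s (projv x) (lastc x) ->
        exists e, In e (Oc a b C) /\ csem e x.
      move=> s Hs Ss; exists (f, s); split; last by apply/csemS.
      rewrite Oc_S; apply/In_cat; right; apply/In_flatten; exists (zone f la lb); split=> //.
      exact: (In_map (fun e => zone e la lb) Hf).
    case: (ltR_tot (lastc x) la) => [E|[H|H]].
    * apply: (Hz (SGraph (constl k.+1 la))); first by right; left.
      by rewrite /= evl_const.
    * apply: (Hz (SBand NInf (Fin (constl k.+1 la)))); first by left.
      by rewrite /= evl_const.
    * case: (ltR_tot (lastc x) lb) => [E|[H'|H']].
      -- apply: (Hz (SGraph (constl k.+1 lb))); first by right; right; left.
         by rewrite /= evl_const.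
      -- by case: Hb; apply/box_split.
      -- apply: (Hz (SBand (Fin (constl k.+1 lb)) PInf)); first by right; right; right; left.
         by rewrite /= evl_const.
  + exists (f, SBand NInf PInf); split; last by apply/csemS.
    by rewrite Oc_S; apply/In_cat; left; apply: (In_map (fun e => (e, SBand NInf PInf) : cdesc R k.+1)).
- move=> e1 e2 x /Oc_inv H1 /Oc_inv H2 /csemS [X1 S1] /csemS [X2 S2] y.
  have key : forall f1 f2, In f1 (ds (projv a) (projv b) C0 ++ Oc (projv a) (projv b) C0) ->
      In f2 (ds (projv a) (projv b) C0 ++ Oc (projv a) (projv b) C0) ->
      e1.1 = f1 -> e2.1 = f2 -> e1.2 = e2.2 -> csem e1 y <-> csem e2 y.
    move=> f1 f2 F1 F2 E1 E2 E3; rewrite !csemS E3 E1 E2.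
    rewrite E1 in X1; rewrite E2 in X2.
    by rewrite (PP _ _ _ F1 F2 X1 X2 (projv y)).
  case: H1 => [[f1 [E1 F1]]|[f1 [Z1 F1]]]; case: H2 => [[f2 [E2 F2]]|[f2 [Z2 F2]]].
  + apply: (key f1 f2); try (apply/In_cat; right; done); by subst.
  + exfalso; subst e1; case/zone_In: Z2 => E _; rewrite E in X2.
    exact: (Oc_out F1 X1 (ds_sem G0 F2 X2)).
  + exfalso; subst e2; case/zone_In: Z1 => E _; rewrite E in X1.
    exact: (Oc_out F2 X2 (ds_sem G0 F1 X1)).
  + case/zone_In: (Z1) => E1 _; case/zone_In: (Z2) => E2 _.
    apply: (key f1 f2); try (apply/In_cat; left; done); try done.
    exact: zone_eq Hab Z1 Z2 S1 S2.
Qed.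

Lemma L2 n (a b : 'rV[R]_n.+1) (C : seq (cdesc R n)) :
  is_box posR a b -> lindec C -> (forall c, In c C -> goodc a b c) ->
  lindec (ds a b C ++ Oc a b C).
Proof.
elim: n a b C => [|k IH] a b C Hbox.
- move=> /= HP G; case: (O0_facts C Hbox) => OV OC OP.
  by apply: part_combine => //; apply: Oc_out.
- move=> [HP HL0] G.
  set C0 := map (fun c : cdesc R k.+1 => c.1) C.
  have G0 : forall c, In c C0 -> goodc (projv a) (projv b) c.
    by move=> c /In_map_iff [d [<- Hd]]; case: (G _ Hd).
  case/is_box_split: Hbox => Hbox0 Hab.
  have IHk := IH _ _ C0 Hbox0 HL0 G0.
  have P0 := lindec_part IHk.
  case: (Ok_facts P0 G0 Hab) => OV OC OP.
  split; first by apply: part_combine => //; apply: Oc_out.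
  apply: lindec_eq IHk => e; rewrite In_map_iff In_cat; split.
  + case=> [/ds_In [c [-> Hc Hne]]|He].
    * have GV : forall c, In c C -> goodc a b c /\ cvalid c.
        by move=> c' Hc'; split; [exact: G|case: HP => V _ _; exact: V].
      move/In_map_iff: Hc => [c' [Ec Hc']]; subst c.
      have [g v] := GV c' Hc'.
      exists (cut a b c'); split=> //; apply/In_cat; left; apply/ds_In; exists c'; split=> //.
      by apply/(ne_iff g v Hab).
    * exists (e, SBand NInf PInf); split=> //; apply/In_cat; right.
      by rewrite Oc_S; apply/In_cat; left; apply: (In_map (fun e => (e, SBand NInf PInf) : cdesc R k.+1)).
  + case=> d [<- /In_cat [Hd|Hd]].
    * left; have GV : forall c, In c C -> goodc a b c /\ cvalid c.
        by move=> c' Hc'; split; [exact: G|case: HP => V _ _; exact: V].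
      apply/(ds_fst GV Hab); exact: (In_map (fun c : cdesc R k.+1 => c.1) Hd).
    * case/Oc_inv: Hd => [[f [-> Hf]]|[f [Z Hf]]]; first by right.
      by case/zone_In: Z => ->; left.
Qed.


Definition lw n (cs : seq (cdesc R n)) (Y : 'rV[R]_n.+1 -> Prop) (C : seq (cdesc R n)) : Prop :=
  [/\ lindec C,
      forall c', In c' C ->
        (forall x, csem c' x -> Y x) \/ (forall x, csem c' x -> ~ Y x),
      forall c, In c cs ->
        [/\ In c C, exists x, csem c x & forall x, csem c x -> Y x] &
      forall c', In c' C -> (exists x, csem c' x /\ Y x) -> In c' cs].

Lemma lindec_ofE n (cs : seq (cdesc R n)) Y : lindec_of posR cs Y <-> exists C, lw cs Y C.
Proof. by []. Qed.

Lemma lindec_of_cut n (a b : 'rV[R]_n.+1) cs Y C :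
  is_box posR a b -> lw cs Y C -> (forall c, In c C -> goodc a b c) ->
  lw (ds a b cs) (fun x => box a b x /\ Y x) (ds a b C ++ Oc a b C).
Proof.
move=> Hbox [HC H2 H3 H4] G; split.
- exact: L2.
- move=> c' /In_cat [/ds_In [c [-> Hc Hne]]|Ho].
  + case: (H2 _ Hc) => HY; [left|right] => x /(cut_sem (G _ Hc) Hne) [Hb Hx].
    * by split=> //; apply: HY.
    * by case=> _; apply: HY.
  + by right=> x Hx [Hb _]; exact: Oc_out Ho Hx Hb.
- move=> c /ds_In [c0 [-> Hc0 Hne]]; case: (H3 _ Hc0) => HC0 _ HY0.
  have G0 := G _ HC0; split.
  + by apply/In_cat; left; apply/ds_In; exists c0.
  + by case: (Hne) => x Hx; exists x; apply/(cut_sem G0 Hne).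
  + by move=> x /(cut_sem G0 Hne) [Hb Hx]; split=> //; apply: HY0.
- move=> c' /In_cat [/ds_In [c [-> Hc Hne]]|Ho] [x [Hx [Hb HY]]].
  + move/(cut_sem (G _ Hc) Hne): Hx => [_ Hx].
    have Hcs : In c cs by apply: H4 => //; exists x.
    by apply/ds_In; exists c.
  + by case: (Oc_out Ho Hx Hb).
Qed.

Lemma lw_inv n (cs1 cs2 : seq (cdesc R n)) Y1 Y2 C :
  (forall c, In c cs1 <-> In c cs2) -> (forall x, Y1 x <-> Y2 x) ->
  lw cs1 Y1 C -> lw cs2 Y2 C.
Proof.
move=> E EY [H1 H2 H3 H4]; split=> //.
- move=> c' Hc'; case: (H2 _ Hc') => H; [left|right] => x Hx; [apply/EY|rewrite -EY]; exact: H.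
- move=> c /E Hc; case: (H3 _ Hc) => ? ? H; split=> // x Hx; apply/EY; exact: H.
- move=> c' Hc' [x [Hx HY]]; apply/E; apply: H4 => //; exists x; split=> //; exact/EY.
Qed.

Lemma special_inv n (cs1 cs2 : seq (cdesc R n)) Y1 Y2 :
  (forall c, In c cs1 <-> In c cs2) -> (forall x, Y1 x <-> Y2 x) ->
  special posR cs1 Y1 -> special posR cs2 Y2.
Proof.
elim: n cs1 cs2 Y1 Y2 => [|k IH] cs1 cs2 Y1 Y2 E EY.
- by case=> C HC; exists C; exact: lw_inv E EY HC.
- case=> [[C HC] Hsp Hc2 Hc3]; split.
  + by exists C; exact: lw_inv E EY HC.
  + apply: IH Hsp.
    * by move=> c; rewrite !In_map_iff; split; case=> d [<- /E ?]; exists d.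
    * by move=> z; split; case=> x [/EY ? ?]; exists x.
  + by move=> c1 c2 c3 f g /E H1 /E H2 /E H3; apply: Hc2.
  + by move=> c1 c2 h f g /E H1 /E H2; apply: Hc3.
Qed.

Fixpoint gs n : 'rV[R]_n.+1 -> 'rV[R]_n.+1 -> seq (cdesc R n) -> ('rV[R]_n.+1 -> Prop) -> Prop :=
  match n return 'rV[R]_n.+1 -> 'rV[R]_n.+1 -> seq (cdesc R n) -> ('rV[R]_n.+1 -> Prop) -> Prop with
  | 0 => fun a b cs Y => exists C, lw cs Y C /\ (forall c, In c C -> goodc a b c)
  | k.+1 => fun a b cs Y =>
      (exists C, lw cs Y C /\ (forall c, In c C -> goodc a b c)) /\
      gs (projv a) (projv b) (map (fun c : cdesc R k.+1 => c.1) cs) (projset Y)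
  end.

Lemma gs_top n (a b : 'rV[R]_n.+1) cs Y :
  gs a b cs Y -> exists C, lw cs Y C /\ (forall c, In c C -> goodc a b c).
Proof. by case: n a b cs Y => [|k] a b cs Y //= []. Qed.

Lemma cutS_graph m la lb (s : shape R m) f : cutS la lb s = SGraph f -> s = SGraph f.
Proof. by case: s => [g|g h] //= [->]. Qed.
Lemma cutS_band m la lb (s : shape R m) f' g' : cutS la lb s = SBand f' g' ->
  exists f g, [/\ s = SBand f g, f' = lowE la f & g' = upE lb g].
Proof. by case: s => [g|f g] //= [<- <-]; exists f, g. Qed.

Lemma closure_mono m (S T : 'rV[R]_m -> Prop) x :
  (forall y, S y -> T y) -> Defs.closure posR S x -> Defs.closure posR T x.
Proof.
move=> H Cl a b Hx; case: (Cl a b Hx) => y [Sy Hy]; exists y; split=> //; exact: H.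
Qed.

Lemma lowE_lt m la (f : ext (lin R m)) x t :
  ltE (evx (lowE la f) x) (Fin t) -> ltE (evx f x) (Fin t).
Proof. by case: f. Qed.
Lemma upE_lt m lb (g : ext (lin R m)) x t :
  ltE (Fin t) (evx (upE lb g) x) -> ltE (Fin t) (evx g x).
Proof. by case: g. Qed.

Lemma main_special n (cs : seq (cdesc R n)) Y (a b : 'rV[R]_n.+1) :
  special posR cs Y -> is_box posR a b -> gs a b cs Y ->
  special posR (ds a b cs) (fun x => box a b x /\ Y x).
Proof.
elim: n cs Y a b => [|k IH] cs Y a b.
- move=> _ Hbox [C [HW G]]; exists (ds a b C ++ Oc a b C); exact: lindec_of_cut.
- move=> [Hlo Hsp Hc2 Hc3] Hbox [[C [HW G]] Hgs]; case/is_box_split: (Hbox) => Hbox0 Hab.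
  case: (HW) => HC W2 W3 W4.
  have PC := lindec_part HC.
  have CSp : forall c, In c cs -> goodc a b c /\ cvalid c.
    move=> c Hc; case: (W3 _ Hc) => HcC _ _; split; first exact: G.
    by case: PC => V _ _; apply: V.
  have sub1 : forall c, In c cs -> ne a b c ->
      forall x, csem (cut a b c).1 x -> csem c.1 x.
    move=> c Hc Hne x; case: (CSp _ Hc) => g v.
    have Hne1 := iffLR (ne_iff g v Hab) Hne.
    by case: g => _ g1 /(cut_sem g1 Hne1) [].
  split.
  + by exists (ds a b C ++ Oc a b C); exact: lindec_of_cut.
  + apply: (special_inv _ _ (IH _ _ _ _ Hsp Hbox0 Hgs)).
    * by move=> e; rewrite (ds_fst CSp Hab).
    * move=> z; split.
      -- case=> Hz [y [Hy Ey]].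
         case: PC => _ Cov _; case: (Cov y) => c [HcC Yc].
         have Hc : In c cs by apply: W4 => //; exists y.
         case: (W3 _ Hc) => _ _ HY.
         have Hc1 : csem c.1 z by rewrite -Ey; case/csemS: Yc.
         case: (CSp _ Hc) => g v.
         have [x [Hb Hx Ex]] := fiber_pt g v Hab Hz Hc1.
         by exists x; split=> //; split=> //; apply: HY.
      -- case=> x [[Hb HY] <-]; split; first by case/box_split: Hb.
         by exists x.
  + move=> c1 c2 c3 f g /ds_In [d1 [-> D1 N1]] /ds_In [d2 [-> D2 N2]] /ds_In [d3 [-> D3 N3]].
    move=> /= /cutS_graph E1 /cutS_graph E2.
    have S3 := sub1 _ D3 N3.
    case: (Hc2 d1 d2 d3 f g D1 D2 D3 E1 E2) => [H|[H|H]].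
    * by left=> x /S3; apply: H.
    * by right; left=> x /S3; apply: H.
    * by right; right=> x /S3; apply: H.
  + move=> c1 c2 h f' g' /ds_In [d1 [-> D1 N1]] /ds_In [d2 [-> D2 N2]].
    move=> /= /cutS_graph E1 /cutS_band [f [g [E2 -> ->]]] [x [Cl1 Cl2 L1 L2]].
    apply: (Hc3 d1 d2 h f g D1 D2 E1 E2); exists x; split.
    * exact: closure_mono (sub1 _ D1 N1) Cl1.
    * exact: closure_mono (sub1 _ D2 N2) Cl2.
    * exact: lowE_lt L1.
    * exact: upE_lt L2.
Qed.


Lemma le_sum m (F G : 'I_m -> R) :
  (forall i, leR (F i) (G i)) -> leR (\sum_i F i) (\sum_i G i).
Proof.
move=> H; elim/big_rec2: _ => [|i y1 y2 _ Hy]; first exact: leR_refl.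
exact: leR_add.
Qed.

Lemma term_bnd (l : L) (p q t : R) : ltR p t -> ltR t q ->
  leR (if posL l then l *: p else l *: q) (l *: t) /\
  leR (l *: t) (if posL l then l *: q else l *: p).
Proof.
move=> H1 H2; case H: (posL l).
- split; right; rewrite /Defs.ltR -scalerBr; exact: posR_scale.
- case: (posL_tri l) => [->|[H'|H']]; first by rewrite !scale0r; split; left.
  + by rewrite H in H'.
  + split; right; rewrite /Defs.ltR.
    * have -> : l *: t - l *: q = (- l) *: (q - t) by rewrite scaleNr scalerBr opprB.
      exact: posR_scale.
    * have -> : l *: p - l *: t = (- l) *: (t - p) by rewrite scaleNr scalerBr opprB.
      exact: posR_scale.
Qed.

Lemma lin_bounds m (f : lin R m) (pa pb : 'rV[R]_m) :
  exists Lo Up, forall x, box pa pb x -> leR Lo (evl f x) /\ leR (evl f x) Up.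
Proof.
exists (\sum_i (if posL (f.1 0 i) then f.1 0 i *: pa 0 i else f.1 0 i *: pb 0 i) + f.2).
exists (\sum_i (if posL (f.1 0 i) then f.1 0 i *: pb 0 i else f.1 0 i *: pa 0 i) + f.2).
move=> x Hx; rewrite /evl; split; (apply: leR_add; last exact: leR_refl);
  apply: le_sum => i; have [H1 H2] := Hx i; have [T1 T2] := term_bnd (f.1 0 i) H1 H2.
- exact: T1.
- exact: T2.
Qed.

Lemma lins_bound m (l : seq (lin R m)) (pa pb : 'rV[R]_m) t1 t2 :
  exists Lo Up, [/\ leR Lo t1, leR t2 Up &
    forall f, In f l -> forall x, box pa pb x -> leR Lo (evl f x) /\ leR (evl f x) Up].
Proof.
elim: l => [|f l [Lo [Up [H1 H2 H3]]]].
- by exists t1, t2; split=> //; left.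
- have [Lf [Uf Hf]] := lin_bounds f pa pb.
  have [mn [M1 M2]] := leR_min Lo Lf; have [mx [X1 X2]] := leR_max Up Uf.
  exists mn, mx; split.
  + exact: leR_trans M1 H1.
  + exact: leR_trans H2 X1.
  + move=> g [<-|Hg] x Hx.
    * have [A B] := Hf x Hx; split; [exact: leR_trans M2 A|exact: leR_trans B X2].
    * have [A B] := H3 g Hg x Hx; split; [exact: leR_trans M1 A|exact: leR_trans B X1].
Qed.

Definition exl m (f : ext (lin R m)) : seq (lin R m) :=
  match f with Fin g => [:: g] | _ => [::] end.
Definition fs m (s : shape R m) : seq (lin R m) :=
  match s with SGraph f => [:: f] | SBand f g => exl f ++ exl g end.

Lemma topbnd_of m (pa pb : 'rV[R]_m) la lb s :
  (forall f, In f (fs s) -> bnd pa pb la lb f) -> topbnd pa pb la lb s.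
Proof.
case: s => [f|f g] /= H; first by apply: H; left.
split.
- case: f H => [|f|] //= H; apply: H; left=> //.
- case: g H => [|g|] //= H; apply: H; apply/In_cat; right; left=> //.
Qed.

Lemma shapes_bound m (sl : seq (shape R m)) (pa pb : 'rV[R]_m) t1 t2 e :
  posR e -> exists la lb, [/\ ltR la t1, ltR t2 lb &
    forall s, In s sl -> topbnd pa pb la lb s].
Proof.
move=> He.
have [Lo [Up [H1 H2 H3]]] := lins_bound (flatten (map (@fs m) sl)) pa pb t1 t2.
exists (Lo - e), (Up + e); split.
- exact: ltR_sub_pos.
- exact: ltR_add_pos.
- move=> s Hs; apply: topbnd_of => f Hf x Hx.
  have Hf' : In f (flatten (map (@fs m) sl)).
    by apply/In_flatten; exists (fs s); split=> //; apply: In_map.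
  have [A B] := H3 f Hf' x Hx; split; [exact: ltR_sub_pos|exact: ltR_add_pos].
Qed.

Lemma goodc_extr k (a0 b0 : 'rV[R]_k.+1) la lb (c : cdesc R k.+1) :
  topbnd a0 b0 la lb c.2 -> goodc a0 b0 c.1 -> goodc (extr a0 la) (extr b0 lb) c.
Proof. by move=> H1 H2 /=; rewrite !projv_extr !lastc_extr. Qed.

Lemma exists_box n (cs : seq (cdesc R n)) Y :
  special posR cs Y -> forall (E : seq (cdesc R n)) (a1 b1 : 'rV[R]_n.+1),
  is_box posR a1 b1 -> exists a b, [/\ is_box posR a b,
    (forall x, box a1 b1 x -> box a b x),
    (forall c, In c E -> goodc a b c) & gs a b cs Y].
Proof.
elim: n cs Y => [|k IH] cs Y.
- move=> [C HC] E a1 b1 Hb1; exists a1, b1; split=> //.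
  by exists C; split.
- move=> [[C HW] Hsp _ _] E a1 b1 Hb1; case/is_box_split: Hb1 => Hb10 Hab1.
  have [a0 [b0 [Hb0 Hsub0 G0 Hgs0]]] :=
    IH _ _ Hsp (map (fun c : cdesc R k.+1 => c.1) (E ++ C)) _ _ Hb10.
  have [la [lb [T1 T2 TB]]] :=
    shapes_bound (map (fun c : cdesc R k.+1 => c.2) (E ++ C)) a0 b0 (lastc a1) (lastc b1) Hab1.
  have GG : forall c, In c (E ++ C) -> goodc (extr a0 la) (extr b0 lb) c.
    move=> c Hc; apply: goodc_extr.
    + by apply: TB; exact: (In_map (fun c : cdesc R k.+1 => c.2) Hc).
    + by apply: G0; exact: (In_map (fun c : cdesc R k.+1 => c.1) Hc).
  exists (extr a0 la), (extr b0 lb); split.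
  + apply/is_box_split; rewrite !projv_extr !lastc_extr; split=> //.
    exact: ltR_trans T1 (ltR_trans Hab1 T2).
  + move=> x /box_split [Hx [H1 H2]]; apply/box_split; rewrite !projv_extr !lastc_extr.
    split; first exact: Hsub0.
    by split; [exact: ltR_trans T1 H1|exact: ltR_trans H2 T2].
  + by move=> c Hc; apply: GG; apply/In_cat; left.
  + split; last by rewrite !projv_extr.
    exists C; split=> //.
    by move=> c Hc; apply: GG; apply/In_cat; right.
Qed.

Lemma final n (cs : seq (cdesc R n)) Y (Hcs : special posR cs Y)
  (a1 b1 : 'rV[R]_n.+1) (HB1 : is_box posR a1 b1) :
  exists a b : 'rV[R]_n.+1,
    [/\ is_box posR a b,
        (forall x, box a1 b1 x -> box a b x) &
        exists ds : seq (cdesc R n),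
          [/\ special posR ds (fun x => box a b x /\ Y x),
              (forall d, In d ds -> exists c, In c cs /\
                  forall x, csem d x <-> (box a b x /\ csem c x)) &
              (forall c, In c cs -> (exists x, box a b x /\ csem c x) ->
                  exists d, In d ds /\
                  forall x, csem d x <-> (box a b x /\ csem c x))]].
Proof.
have [a [b [Hbox Hsub _ Hgs]]] := exists_box Hcs [::] HB1.
have [C [[_ _ W3 _] G]] := gs_top Hgs.
exists a, b; split=> //; exists (ds a b cs); split.
- exact: main_special.
- move=> d /ds_In [c [-> Hc Hne]]; exists c; split=> //.
  case: (W3 _ Hc) => HcC _ _; exact: cut_sem (G _ HcC) Hne.
- move=> c Hc Hne; exists (cut a b c); split.
  + by apply/ds_In; exists c.
  + case: (W3 _ Hc) => HcC _ _; exact: cut_sem (G _ HcC) Hne.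
Qed.

End Main.

Unset Implicit Arguments.

Theorem mainTheorem12 (L : unitRingType) (posL : pred L)
  (R : lmodType L) (posR : pred R)
  (HL : ordered_division_ring posL) (HR : ordered_vspace posL posR)
  (n : nat) (Y : 'rV[R]_n.+1 -> Prop) (cs : seq (cdesc R n))
  (Hcs : special posR cs Y)
  (a1 b1 : 'rV[R]_n.+1) (HB1 : is_box posR a1 b1) :
  exists a b : 'rV[R]_n.+1,
    [/\ is_box posR a b,
        (forall x, box posR a1 b1 x -> box posR a b x) &
        exists ds : seq (cdesc R n),
          [/\ special posR ds (fun x => box posR a b x /\ Y x),
              (forall d, In d ds -> exists c, In c cs /\
                  forall x, csem posR d x <-> (box posR a b x /\ csem posR c x)) &
              (forall c, In c cs -> (exists x, box posR a b x /\ csem posR c x) ->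
                  exists d, In d ds /\
                  forall x, csem posR d x <-> (box posR a b x /\ csem posR c x))]].
Proof. exact: (final HL HR Hcs HB1). Qed.
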